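(* Let $k\ge 1$ be an integer and $q=2^{-1/k}$. Let $T_k$ be any binary prefix code for the finite set $\mathcal{A}_k=\{(i,j):0\le i,j<k\}$ that is optimal (minimizes $\sum_{(i,j)\in\mathcal{A}_k} q^{i+j}|T_k(i,j)|$) for the weights $w(i,j)=q^{i+j}$ (for $k=1$, $T_1$ assigns the empty word to the single symbol). Then the code $$C_k(i,j)=T_k(i\bmod k,\ j\bmod k)\cdot G_1(\lfloor i/k\rfloor)\cdot G_1(\lfloor j/k\rfloor),\qquad i,j\ge0,$$ where $\cdot$ denotes concatenation of binary strings and $G_1(n)$ is the unary codeword ($n$ ones followed by a zero), is an optimal prefix code for $\mathrm{TDGD}(q)$.
   Context: $\mathcal{A}=\{(i,j): i,j\in\mathbb{Z}_{\ge 0}\}$; $\mathrm{TDGD}(q)$ is the distribution $P(i,j)=(1-q)^2q^{i+j}$ on $\mathcal{A}$. A code is optimal for $\mathrm{TDGD}(q)$ if it minimizes the expected codeword length among all binary prefix codes for $\mathcal{A}$. *)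

(* Defs.v *)
From Stdlib Require Import Reals List Arith.
Open Scope R_scope.

Definition word := list bool.

Definition is_prefix (u v : word) : Prop := exists w, v = u ++ w.

Definition prefix_code (C : nat -> nat -> word) : Prop :=
  forall i j i' j', (i, j) <> (i', j') -> ~ is_prefix (C i j) (C i' j').

(* A binary prefix code for the finite alphabet A_k = {(i,j) : i,j < k}
   (values of C outside A_k are irrelevant). *)
Definition prefix_code_fin (k : nat) (C : nat -> nat -> word) : Prop :=
  forall i j i' j', (i < k)%nat -> (j < k)%nat -> (i' < k)%nat -> (j' < k)%nat ->
    (i, j) <> (i', j') -> ~ is_prefix (C i j) (C i' j').

Fixpoint rsum (n : nat) (f : nat -> R) : R :=
  match n with
  | O => 0
  | S m => rsum m f + f m
  end.

Definition sq_cost (n : nat) (w : nat -> nat -> R) (C : nat -> nat -> word) : R :=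
  rsum n (fun i => rsum n (fun j => w i j * INR (length (C i j)))).

Definition optimal_fin (k : nat) (q : R) (T : nat -> nat -> word) : Prop :=
  prefix_code_fin k T /\
  forall T', prefix_code_fin k T' ->
    sq_cost k (fun i j => q ^ (i + j)) T <= sq_cost k (fun i j => q ^ (i + j)) T'.

Definition tdgd (q : R) (i j : nat) : R := (1 - q) ^ 2 * q ^ (i + j).

(* Expected length (a value in [0, +oo]) is the supremum of the partial sums
   over the squares [0,n)^2, which are cofinal among finite subsets of A.
   E_P[C] <= E_P[D] in the extended reals is thus expressed as below. *)
Definition exp_len_le (P : nat -> nat -> R) (C D : nat -> nat -> word) : Prop :=
  forall n, exists m, sq_cost n P C <= sq_cost m P D.

Definition optimal_tdgd (q : R) (C : nat -> nat -> word) : Prop :=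
  prefix_code C /\
  forall D, prefix_code D -> exp_len_le (tdgd q) C D.

Definition unary (n : nat) : word := repeat true n ++ false :: nil.

Definition qk (k : nat) : R := Rpower 2 (- / INR k).

(* Main.v *)
Require Import Defs.
From Stdlib Require Import Reals List Arith Lia Lra Permutation.
Open Scope R_scope.

Fixpoint lsum {A} (l : list A) (f : A -> R) : R :=
  match l with nil => 0 | a :: l' => f a + lsum l' f end.

Lemma lsum_app {A} (l1 l2 : list A) f : lsum (l1 ++ l2) f = lsum l1 f + lsum l2 f.
Proof. induction l1; simpl; [ring| rewrite IHl1; ring]. Qed.

Lemma lsum_ext {A} (l : list A) f g : (forall x, In x l -> f x = g x) -> lsum l f = lsum l g.
Proof. induction l; simpl; intros H; auto. rewrite H, IHl; auto. Qed.

Lemma lsum_le {A} (l : list A) f g : (forall x, In x l -> f x <= g x) -> lsum l f <= lsum l g.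
Proof. induction l; simpl; intros H; [lra|]. pose proof (H a (or_introl eq_refl)).
  assert (lsum l f <= lsum l g) by (apply IHl; auto). lra. Qed.

Lemma lsum_nonneg {A} (l : list A) f : (forall x, In x l -> 0 <= f x) -> 0 <= lsum l f.
Proof. intros H. apply Rle_trans with (lsum l (fun _ => 0)).
  - clear H; induction l; simpl; lra.
  - apply lsum_le; auto.
  Qed.

Lemma lsum_plus {A} (l : list A) f g : lsum l (fun x => f x + g x) = lsum l f + lsum l g.
Proof. induction l; simpl; [ring| rewrite IHl; ring]. Qed.

Lemma lsum_scal {A} (l : list A) c f : lsum l (fun x => c * f x) = c * lsum l f.
Proof. induction l; simpl; [ring| rewrite IHl; ring]. Qed.

Lemma lsum_map {A B} (h : A -> B) l f : lsum (map h l) f = lsum l (fun x => f (h x)).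
Proof. induction l; simpl; auto. rewrite IHl; auto. Qed.

Lemma lsum_filter {A} (p : A -> bool) l f :
  lsum l f = lsum (filter p l) f + lsum (filter (fun x => negb (p x)) l) f.
Proof. induction l; simpl; [ring|]. destruct (p a); simpl; rewrite IHl; ring. Qed.

Lemma lsum_perm {A} (l l' : list A) f : Permutation l l' -> lsum l f = lsum l' f.
Proof. induction 1; simpl; try ring; auto. rewrite IHPermutation; auto. lra. Qed.

Lemma lsum_ge_term {A} (l : list A) f x : (forall y, In y l -> 0 <= f y) -> In x l -> f x <= lsum l f.
Proof. induction l; simpl; intros H Hx; [contradiction|]. destruct Hx as [<-|Hx].
  - assert (0 <= lsum l f) by (apply lsum_nonneg; auto). lra.
  - assert (f x <= lsum l f) by (apply IHl; auto). assert (0 <= f a) by auto. lra. Qed.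

Lemma rsum_lsum n f : rsum n f = lsum (seq 0 n) f.
Proof. induction n; [reflexivity|]. cbn [rsum]. rewrite seq_S, lsum_app, IHn; simpl. ring. Qed.

Definition sqlist n := list_prod (seq 0 n) (seq 0 n).
Definition rsq n (F : nat -> nat -> R) := rsum n (fun i => rsum n (fun j => F i j)).

Lemma lsum_prod {A B} (l : list A) (l' : list B) G :
  lsum (list_prod l l') G = lsum l (fun i => lsum l' (fun j => G (i, j))).
Proof. induction l; simpl; auto. rewrite lsum_app, lsum_map, IHl. auto. Qed.

Lemma rsq_lsum n F : rsq n F = lsum (sqlist n) (fun p => F (fst p) (snd p)).
Proof. unfold rsq, sqlist. rewrite lsum_prod, rsum_lsum. apply lsum_ext; intros.
  rewrite rsum_lsum. auto. Qed.

Lemma in_sqlist n i j : In (i, j) (sqlist n) <-> (i < n /\ j < n)%nat.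
Proof. unfold sqlist. rewrite in_prod_iff, !in_seq. lia. Qed.

Lemma NoDup_map_pair {A B} (a : A) (l : list B) : NoDup l -> NoDup (map (pair a) l).
Proof. induction 1; simpl; constructor; auto. rewrite in_map_iff. intros [y [E Hy]].
  inversion E; subst; auto. Qed.

Lemma NoDup_prod {A B} (l : list A) (l' : list B) : NoDup l -> NoDup l' -> NoDup (list_prod l l').
Proof. induction 1; intros; simpl; [constructor|]. apply NoDup_app; auto.
  - apply NoDup_map_pair; auto.
  - intros [u v] Hm Hp. rewrite in_map_iff in Hm. destruct Hm as [y [E _]]. inversion E; subst.
    apply in_prod_iff in Hp. tauto. Qed.

Lemma NoDup_sqlist n : NoDup (sqlist n).
Proof. apply NoDup_prod; apply seq_NoDup. Qed.

Lemma rsum_ext n f g : (forall i, (i < n)%nat -> f i = g i) -> rsum n f = rsum n g.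
Proof. induction n; simpl; intros; auto. rewrite IHn, H; auto. Qed.
Lemma rsum_le n f g : (forall i, (i < n)%nat -> f i <= g i) -> rsum n f <= rsum n g.
Proof. induction n; simpl; intros; [lra|]. assert (f n <= g n) by auto.
  assert (rsum n f <= rsum n g) by auto. lra. Qed.
Lemma rsum_scal n c f : rsum n (fun i => c * f i) = c * rsum n f.
Proof. induction n; simpl; [ring|rewrite IHn; ring]. Qed.
Lemma rsum_plus n f g : rsum n (fun i => f i + g i) = rsum n f + rsum n g.
Proof. induction n; simpl; [ring|rewrite IHn; ring]. Qed.
Lemma rsum_nonneg n f : (forall i, (i < n)%nat -> 0 <= f i) -> 0 <= rsum n f.
Proof. induction n; simpl; intros; [lra|]. assert (0 <= f n) by auto. assert (0<= rsum n f) by auto. lra. Qed.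
Lemma rsum_add n m f : rsum (n + m) f = rsum n f + rsum m (fun a => f (n + a)%nat).
Proof. induction m; simpl. rewrite Nat.add_0_r; ring. rewrite Nat.add_succ_r; simpl. rewrite IHm; ring. Qed.
Lemma rsum_mono n m f : (n <= m)%nat -> (forall i, (i < m)%nat -> 0 <= f i) -> rsum n f <= rsum m f.
Proof. intros Hnm H. replace m with (n + (m - n))%nat by lia. rewrite rsum_add.
  assert (0 <= rsum (m - n) (fun a => f (n + a)%nat)) by (apply rsum_nonneg; intros; apply H; lia). lra. Qed.
Lemma rsum_reindex k M f : rsum (k * M) f = rsum M (fun x => rsum k (fun a => f (a + k * x)%nat)).
Proof. induction M; simpl. rewrite Nat.mul_0_r; auto.
  replace (k * S M)%nat with (k * M + k)%nat by lia. rewrite rsum_add, IHM. f_equal.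
  apply rsum_ext; intros; f_equal; lia. Qed.
Lemma lsum_map_r {A} (l : list A) f c : lsum l (fun x => f x * c) = lsum l f * c.
Proof. induction l; simpl; [ring|rewrite IHl; ring]. Qed.
Lemma rsum_scal_r n c f : rsum n (fun i => f i * c) = rsum n f * c.
Proof. induction n; simpl; [ring|rewrite IHn; ring]. Qed.
Lemma q_pos k : 0 < qk k.
Proof. unfold qk, Rpower. apply exp_pos. Qed.

Lemma q_pow_k k : (1 <= k)%nat -> qk k ^ k = /2.
Proof. intros Hk. rewrite <- Rpower_pow by apply q_pos. unfold qk.
  rewrite Rpower_mult. replace (- / INR k * INR k) with (-(1)).
  - rewrite Rpower_Ropp, Rpower_1; lra.
  - assert (0 < INR k) by (apply lt_0_INR; lia). field. lra. Qed.

Lemma pow_le1 x n : 0 <= x <= 1 -> x ^ n <= 1.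
Proof. intros H; induction n; simpl; [lra|]. 
  assert (0 <= x ^ n) by (apply pow_le; lra). nra. Qed.

Lemma q_le1 k : (1 <= k)%nat -> qk k <= 1.
Proof. intros Hk. destruct (Rle_dec (qk k) 1) as [h|h]; auto. exfalso. apply Rnot_le_lt in h.
  assert (1 < qk k ^ k) by (apply Rlt_pow_R1; [lra|lia]). rewrite (q_pow_k k Hk) in H; lra. Qed.

Lemma q_ge_half k : (1 <= k)%nat -> /2 <= qk k.
Proof. intros Hk. rewrite <- (q_pow_k k Hk).
  assert (E : qk k ^ k = qk k * qk k ^ (k - 1)) by (replace k with (S (k-1)) at 2 by lia; simpl; replace (S (k-1) - 1)%nat with (k-1)%nat by lia; ring).
  rewrite E.
  pose proof (q_pos k). pose proof (q_le1 k Hk).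
  assert (qk k ^ (k - 1) <= 1) by (apply pow_le1; lra). nra. Qed.

Lemma pow_half_pos n : 0 < (/2) ^ n.
Proof. apply pow_lt; lra. Qed.

Lemma pow2_half n : 2 ^ n * (/2) ^ n = 1.
Proof. rewrite <- Rpow_mult_distr. replace (2 * /2) with 1 by field. apply pow1. Qed.


Lemma half_pow_anti a b : (b <= a)%nat -> (/2) ^ a <= (/2) ^ b.
Proof. intros H. replace a with (b + (a - b))%nat by lia. rewrite pow_add.
  pose proof (pow_half_pos b). assert ((/2) ^ (a - b) <= 1) by (apply pow_le1; lra). nra. Qed.

Lemma dual_pt w mu n ns : 0 < w -> 0 <= mu -> 2 ^ ns * w <= mu -> mu <= 2 ^ (ns + 1) * w ->
  w * INR ns + mu * (/2) ^ ns <= w * INR n + mu * (/2) ^ n.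
Proof. intros Hw Hmu H1 H2.
  assert (A1 : mu * (/2) ^ (ns + 1) <= w).
  { pose proof (pow2_half (ns+1)). pose proof (pow_half_pos (ns+1)).
    apply Rmult_le_compat_r with (r := (/2)^(ns+1)) in H2; [|lra].
    replace (2 ^ (ns + 1) * w * (/ 2) ^ (ns + 1)) with (w * (2 ^ (ns + 1) * (/ 2) ^ (ns + 1))) in H2 by ring.
    rewrite pow2_half in H2. lra. }
  assert (A2 : w <= mu * (/2) ^ ns).
  { pose proof (pow2_half ns). pose proof (pow_half_pos ns).
    apply Rmult_le_compat_r with (r := (/2)^ns) in H1; [|lra].
    replace (2 ^ ns * w * (/ 2) ^ ns) with (w * (2 ^ ns * (/ 2) ^ ns)) in H1 by ring.
    rewrite pow2_half in H1. lra. }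
  set (f := fun m => w * INR m + mu * (/2) ^ m).
  change (f ns <= f n).
  assert (Hs : forall m, f (S m) = f m + w - mu * (/2) ^ (S m)).
  { intros m. unfold f. rewrite S_INR. simpl. field. }
  assert (Hup : forall d, f ns <= f (ns + d)%nat).
  { induction d. rewrite Nat.add_0_r; lra.
    replace (ns + S d)%nat with (S (ns + d)) by lia. rewrite Hs.
    assert (mu * (/2) ^ S (ns + d) <= mu * (/2) ^ (ns + 1)).
    { apply Rmult_le_compat_l; auto. apply half_pow_anti. lia. }
    lra. }
  assert (Hdown : forall d, (d <= ns)%nat -> f ns <= f (ns - d)%nat).
  { induction d; intros Hd. rewrite Nat.sub_0_r; lra.
    apply Rle_trans with (f (ns - d)%nat). apply IHd; lia.
    replace (ns - d)%nat with (S (ns - S d)) by lia. rewrite Hs.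
    assert (mu * (/2) ^ ns <= mu * (/2) ^ S (ns - S d)).
    { apply Rmult_le_compat_l; auto. apply half_pow_anti. lia. }
    lra. }
  destruct (Nat.le_gt_cases ns n).
  - replace n with (ns + (n - ns))%nat by lia. apply Hup.
  - replace n with (ns - (ns - n))%nat by lia. apply Hdown. lia.
Qed.

Definition hd_bit (w : word) : bool := match w with b :: _ => b | nil => false end.

Lemma word_dec_hd (w : word) : w <> nil -> w = hd_bit w :: tl w.
Proof. destruct w; simpl; congruence. Qed.

Lemma lsum_single {A} (l : list A) g x : NoDup l -> In x l -> (forall y, In y l -> y = x) -> lsum l g = g x.
Proof. intros Hnd Hx Hall. destruct l as [|a l']; [contradiction|].
  assert (a = x) by (apply Hall; left; auto). subst a.
  destruct l' as [|b l'']; simpl. ring.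
  assert (b = x) by (apply Hall; right; left; auto). subst b.
  inversion Hnd; subst. exfalso; apply H1; left; auto. Qed.

Lemma kraft {A} L : forall (l : list A) (f : A -> word),
  NoDup l -> (forall x, In x l -> (length (f x) <= L)%nat) ->
  (forall x y, In x l -> In y l -> x <> y -> ~ is_prefix (f x) (f y)) ->
  lsum l (fun x => (/2) ^ length (f x)) <= 1.
Proof.
  induction L; intros l f Hnd Hlen Hpf;
  (destruct (Classical_Prop.classic (exists x, In x l /\ f x = nil)) as [[x [Hx Hfx]]|Hne];
   [ rewrite (lsum_single l _ x Hnd Hx); [rewrite Hfx; simpl; lra|];
     intros y Hy; destruct (Classical_Prop.classic (y = x)) as [e|n]; auto; exfalso;
     apply (Hpf x y Hx Hy (fun e => n (eq_sym e))); rewrite Hfx; exists (f y); reflexivity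
   | ]).
  - destruct l as [|a l]; simpl; [lra|]. exfalso. apply Hne. exists a; split; [left; auto|].
    specialize (Hlen a (or_introl eq_refl)). destruct (f a); simpl in *; auto; lia.
  - assert (Hnn : forall x, In x l -> f x <> nil) by (intros x Hx E; apply Hne; eauto).
    rewrite (lsum_filter (fun x => hd_bit (f x))).
    assert (Hsplit : forall (b : bool), 
      lsum (filter (fun x => Bool.eqb b (hd_bit (f x))) l) (fun x => (/2) ^ length (f x)) <= /2).
    { intros b. 
      rewrite (lsum_ext _ _ (fun x => /2 * (/2) ^ length (tl (f x)))).
      2:{ intros x Hx. apply filter_In in Hx. destruct Hx as [Hx _].
          rewrite (word_dec_hd (f x) (Hnn x Hx)) at 1. simpl. ring. }
      rewrite lsum_scal.
      assert (lsum (filter (fun x => Bool.eqb b (hd_bit (f x))) l) (fun x => (/ 2) ^ length (tl (f x))) <= 1).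
      { apply IHL.
        - apply NoDup_filter; auto.
        - intros x Hx. apply filter_In in Hx. destruct Hx as [Hx _]. 
          specialize (Hlen x Hx). specialize (Hnn x Hx). destruct (f x); simpl in *; [congruence|lia].
        - intros x y Hx Hy Hxy [w Hw]. apply filter_In in Hx, Hy. destruct Hx as [Hx Bx], Hy as [Hy By].
          apply (Hpf x y Hx Hy Hxy). exists w.
          rewrite (word_dec_hd (f x) (Hnn x Hx)), (word_dec_hd (f y) (Hnn y Hy)), Hw.
          apply Bool.eqb_prop in Bx, By. rewrite <- Bx, <- By. reflexivity. }
      lra. }
    pose proof (Hsplit true). pose proof (Hsplit false).
    rewrite (filter_ext (fun x => hd_bit (f x)) (fun x => Bool.eqb true (hd_bit (f x)))).
    2:{ intros x; destruct (hd_bit (f x)); auto. }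
    rewrite (filter_ext (fun x => negb (hd_bit (f x))) (fun x => Bool.eqb false (hd_bit (f x)))).
    2:{ intros x; destruct (hd_bit (f x)); auto. }
    lra.
Qed.

Fixpoint val (w : word) : R :=
  match w with nil => 0 | b :: w' => ((if b then 1 else 0) + val w') / 2 end.

Lemma val_bounds w : 0 <= val w /\ val w + (/2) ^ length w <= 1.
Proof. induction w as [|b w IH]; simpl; [lra|]. destruct b; lra. Qed.

Lemma val_app u r : val (u ++ r) = val u + (/2) ^ length u * val r.
Proof. induction u as [|b u IH]; simpl; [ring|]. rewrite IH. field. Qed.

Lemma prefix_val u v : is_prefix u v -> val u <= val v < val u + (/2) ^ length u.
Proof. intros [r ->]. rewrite val_app. destruct (val_bounds r).
  pose proof (pow_lt (/2) (length u) ltac:(lra)). pose proof (pow_lt (/2) (length r) ltac:(lra)).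
  split; nra. Qed.

Fixpoint bin (l n : nat) : word :=
  match l with O => nil
  | S l' => (2 ^ l' <=? n)%nat :: bin l' (if (2 ^ l' <=? n)%nat then (n - 2 ^ l')%nat else n) end.

Lemma bin_length l n : length (bin l n) = l.
Proof. revert n; induction l; simpl; intros; auto. Qed.

Lemma INR_pow2 l : INR (2 ^ l) = 2 ^ l.
Proof. rewrite pow_INR. simpl. replace (1+1) with 2 by ring. auto. Qed.

Lemma bin_val l : forall n, (n < 2 ^ l)%nat -> val (bin l n) = INR n / 2 ^ l.
Proof. induction l; intros n Hn; simpl.
  - simpl in Hn. assert (n = 0%nat) by lia. subst. simpl. field.
  - pose proof (pow_lt 2 l ltac:(lra)).
    destruct (Nat.leb_spec (2 ^ l) n).
    + rewrite IHl by (simpl in Hn; lia). rewrite minus_INR by auto. rewrite INR_pow2. field. lra.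
    + rewrite IHl by auto. field. lra.
Qed.

Fixpoint sortedl {A} (len : A -> nat) (l : list A) : Prop :=
  match l with nil => True | a :: l' => (forall b, In b l' -> (len a <= len b)%nat) /\ sortedl len l' end.

Lemma kc_sorted {A} (eqd : forall x y : A, {x = y} + {x <> y}) (len : A -> nat) :
  forall (l : list A) (s : R),
  NoDup l -> sortedl len l -> 0 <= s ->
  (forall a, In a l -> exists n, s * 2 ^ len a = INR n) ->
  s + lsum l (fun a => (/2) ^ len a) <= 1 ->
  exists f : A -> word, (forall a, In a l -> length (f a) = len a /\ s <= val (f a)) /\
   (forall a b, In a l -> In b l -> a <> b -> ~ (val (f a) <= val (f b) < val (f a) + (/2) ^ (len a))).
Proof.
  induction l as [|a l IH]; intros s Hnd Hs Hs0 Hint Hk.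
  - exists (fun _ => nil). split; intros; contradiction.
  - simpl in Hk, Hs. destruct Hs as [Hsa Hs]. inversion Hnd as [|? ? Hna Hnd']; subst.
    destruct (Hint a (or_introl eq_refl)) as [n0 Hn0].
    assert (Hl0 : 0 <= lsum l (fun a => (/2) ^ len a)) by (apply lsum_nonneg; intros; apply pow_le; lra).
    pose proof (pow_lt 2 (len a) ltac:(lra)) as P2.
    pose proof (pow2_half (len a)) as PH.
    destruct (IH (s + (/2) ^ len a)) as [f [Hf1 Hf2]]; auto.
    + assert (0 < (/2) ^ len a) by (apply pow_lt; lra). lra.
    + intros b Hb. specialize (Hsa b Hb).
      exists (n0 * 2 ^ (len b - len a) + 2 ^ (len b - len a))%nat.
      rewrite plus_INR, mult_INR, INR_pow2, <- Hn0.
      replace (len b) with (len a + (len b - len a))%nat at 1 2 by lia. rewrite pow_add.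
      replace (len a + (len b - len a) - len a)%nat with (len b - len a)%nat by lia.
      rewrite Rmult_plus_distr_r. 
      replace ((/ 2) ^ len a * (2 ^ len a * 2 ^ (len b - len a))) with ((2 ^ len a * (/ 2) ^ len a) * 2 ^ (len b - len a)) by ring.
      rewrite PH. ring.
    + lra.
    + assert (Hlt : (n0 < 2 ^ len a)%nat).
      { apply INR_lt. rewrite INR_pow2, <- Hn0.
        assert (H : s * 2 ^ len a <= (1 - (/2)^len a) * 2^len a) by (apply Rmult_le_compat_r; lra).
        replace ((1 - (/2)^len a) * 2^len a) with (2^len a - 2^len a * (/2)^len a) in H by ring.
        rewrite PH in H. lra. }
      assert (Hva : val (bin (len a) n0) = s).
      { rewrite bin_val by auto. rewrite <- Hn0. field. lra. }
      exists (fun x => if eqd x a then bin (len a) n0 else f x). split.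
      * intros x [E|Hx].
        -- subst x. destruct (eqd a a); [|congruence]. rewrite bin_length, Hva. split; auto; lra.
        -- destruct (eqd x a); [subst; contradiction|]. destruct (Hf1 x Hx).
           split; auto. assert (0 < (/2) ^ len a) by (apply pow_lt; lra). lra.
      * intros x y Hx Hy Hxy.
        destruct (eqd x a) as [->|nxa]; destruct (eqd y a) as [->|nya]; try congruence.
        -- destruct Hy as [E|Hy]; [congruence|]. destruct (Hf1 y Hy). rewrite Hva. lra.
        -- destruct Hx as [E|Hx]; [congruence|]. destruct (Hf1 x Hx). rewrite Hva.
           assert (0 < (/2) ^ len a) by (apply pow_lt; lra). lra.
        -- destruct Hx as [E|Hx]; [congruence|]. destruct Hy as [E|Hy]; [congruence|].
           apply Hf2; auto.
Qed.

Fixpoint ins {A} (len : A -> nat) (a : A) (l : list A) : list A :=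
  match l with nil => a :: nil
  | b :: l' => if (len a <=? len b)%nat then a :: b :: l' else b :: ins len a l' end.
Fixpoint isort {A} (len : A -> nat) (l : list A) : list A :=
  match l with nil => nil | a :: l' => ins len a (isort len l') end.

Lemma ins_perm {A} len (a : A) l : Permutation (ins len a l) (a :: l).
Proof. induction l; simpl; auto. destruct (len a <=? len a0)%nat; auto.
  eapply perm_trans; [apply perm_skip; apply IHl|]. apply perm_swap. Qed.

Lemma isort_perm {A} len (l : list A) : Permutation (isort len l) l.
Proof. induction l; simpl; auto. eapply perm_trans; [apply ins_perm|]. auto. Qed.

Lemma ins_sorted {A} len (a : A) l : sortedl len l -> sortedl len (ins len a l).
Proof. induction l as [|b l IH]; simpl; intros H.
  - split; auto. intros; contradiction.
  - destruct H as [Hb Hl]. destruct (Nat.leb_spec (len a) (len b)).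
    + simpl. split; [|split; auto]. intros x [<-|Hx]; auto. specialize (Hb x Hx). lia.
    + simpl. split; auto. intros x Hx. apply (Permutation_in _ (ins_perm len a l)) in Hx.
      destruct Hx as [<-|Hx]; [lia|auto].
Qed.

Lemma isort_sorted {A} len (l : list A) : sortedl len (isort len l).
Proof. induction l; simpl; auto. apply ins_sorted; auto. Qed.

Lemma kraft_converse {A} (eqd : forall x y : A, {x = y} + {x <> y}) (len : A -> nat) (l : list A) :
  NoDup l -> lsum l (fun a => (/2) ^ len a) <= 1 ->
  exists f : A -> word, (forall a, In a l -> length (f a) = len a) /\
    (forall a b, In a l -> In b l -> a <> b -> ~ is_prefix (f a) (f b)).
Proof. intros Hnd Hk. pose proof (isort_perm len l) as Hp.
  destruct (kc_sorted eqd len (isort len l) 0) as [f [Hf1 Hf2]].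
  - apply Permutation_NoDup with l; auto. apply Permutation_sym; auto.
  - apply isort_sorted.
  - lra.
  - intros; exists 0%nat; simpl; ring.
  - rewrite (lsum_perm _ _ _ Hp). lra.
  - exists f. split.
    + intros a Ha. apply Hf1. apply Permutation_in with l; auto. apply Permutation_sym; auto.
    + intros a b Ha Hb Hab Hpre. apply (Hf2 a b); auto.
      * apply Permutation_in with l; auto. apply Permutation_sym; auto.
      * apply Permutation_in with l; auto. apply Permutation_sym; auto.
      * apply prefix_val in Hpre. rewrite <- (proj1 (Hf1 a ltac:(apply Permutation_in with l; auto; apply Permutation_sym; auto))). auto.
Qed.

(* ================= existence of the dual-feasible lengths ================= *)
Open Scope nat_scope.

Fixpoint lsumN {A} (l : list A) (f : A -> nat) : nat :=
  match l with nil => 0 | a :: l' => f a + lsumN l' f end.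

Lemma lsumN_filter {A} (p : A -> bool) l f :
  lsumN l f = lsumN (filter p l) f + lsumN (filter (fun x => negb (p x)) l) f.
Proof. induction l; simpl; auto. destruct (p a); simpl; rewrite IHl; lia. Qed.

Lemma lsumN_ge_term {A} (l : list A) f x : In x l -> f x <= lsumN l f.
Proof. induction l; simpl; intros H; [contradiction|]. destruct H as [<-|H]; [lia|].
  specialize (IHl H); lia. Qed.

Lemma lsumN_bound {A} (l : list A) f c : (forall x, In x l -> f x <= c) -> lsumN l f <= length l * c.
Proof. induction l; simpl; intros H; auto. assert (f a <= c) by auto.
  assert (lsumN l f <= length l * c) by auto. lia. Qed.

Lemma lsumN_const {A} (l : list A) f c : (forall x, In x l -> f x = c) -> lsumN l f = length l * c.
Proof. induction l; simpl; intros H; [auto|]. rewrite (H a (or_introl eq_refl)), IHl; [lia|]. auto. Qed.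

Lemma lsumN_div {A} (l : list A) f u : (forall x, In x l -> Nat.divide u (f x)) -> Nat.divide u (lsumN l f).
Proof. induction l; simpl; intros H. apply Nat.divide_0_r. apply Nat.divide_add_r; auto. Qed.

Lemma lsumN_ext {A} (l : list A) f g : (forall x, In x l -> f x = g x) -> lsumN l f = lsumN l g.
Proof. induction l; simpl; intros H; [auto|]. rewrite H, IHl; auto. Qed.

Lemma lsumN_change {A} (l : list A) f g p : NoDup l -> In p l -> (forall x, In x l -> x <> p -> f x = g x) ->
  lsumN l f + g p = lsumN l g + f p.
Proof. induction l as [|a l IH]; simpl; intros Hnd Hp H; [contradiction|].
  inversion Hnd; subst. destruct Hp as [<-|Hp].
  - rewrite (lsumN_ext l f g). lia. intros x Hx; apply H; auto. intros ->; contradiction.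
  - rewrite H by (auto; intros ->; contradiction). specialize (IH H3 Hp). 
    assert (IH' : lsumN l f + g p = lsumN l g + f p) by (apply IH; auto). lia. Qed.

Lemma INR_lsumN {A} (l : list A) f : INR (lsumN l f) = lsum l (fun x => INR (f x)).
Proof. induction l; simpl; auto. rewrite plus_INR, IHl. auto. Qed.

Lemma div_bounds n Q : Q <> 0 -> Q * (n / Q) <= n < Q * (n / Q + 1).
Proof. intros HQ. pose proof (Nat.div_mod_eq n Q). pose proof (Nat.mod_upper_bound n Q HQ). rewrite Nat.mul_add_distr_l. lia. Qed.

Lemma div_eq n Q d : Q * d <= n < Q * (d + 1) -> n / Q = d.
Proof. intros H. rewrite Nat.mul_add_distr_l in H. assert (Q <> 0) by (intro; subst; lia).
  symmetry. apply (Nat.div_unique n Q d (n - Q * d)); lia. Qed.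

Lemma div_succ n Q : Q <> 0 -> ((n + 1) mod Q = 0 -> (n + 1) / Q = n / Q + 1) /\
  ((n + 1) mod Q <> 0 -> (n + 1) / Q = n / Q).
Proof. intros HQ. pose proof (div_bounds n Q HQ). pose proof (Nat.div_mod_eq (n+1) Q).
  rewrite Nat.mul_add_distr_l in H. split; intros Hm.
  - rewrite Hm, Nat.add_0_r in H0. set (X := (n + 1) / Q) in *.
    assert (n / Q < X).
    { destruct (Nat.le_gt_cases X (n / Q)); auto.
      assert (Q * X <= Q * (n / Q)) by (apply Nat.mul_le_mono_l; auto). lia. }
    assert (X <= n / Q + 1).
    { destruct (Nat.le_gt_cases X (n / Q + 1)); auto.
      assert (Q * (n / Q + 2) <= Q * X) by (apply Nat.mul_le_mono_l; lia). rewrite Nat.mul_add_distr_l in H3. lia. }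
    lia.
  - apply div_eq. rewrite !Nat.mul_add_distr_l. split; [lia|].
    destruct (Nat.eq_dec (n + 1) (Q * (n / Q) + Q * 1)) as [E|E]; [|lia].
    rewrite <- Nat.mul_add_distr_l in E.
    exfalso. apply Hm. rewrite E. rewrite Nat.mul_comm. apply Nat.Div0.mod_mul. Qed.

Lemma decomp_uniq K x y x' y' : y < K -> y' < K -> x * K + y = x' * K + y' -> x = x' /\ y = y'.
Proof. intros Hy Hy' E. destruct (Nat.lt_trichotomy x x') as [H|[H|H]].
  - assert ((x + 1) * K <= x' * K) by (apply Nat.mul_le_mono_r; lia). lia.
  - subst; lia.
  - assert ((x' + 1) * K <= x * K) by (apply Nat.mul_le_mono_r; lia). lia. Qed.

Lemma pow_split_R a b : (b <= a)%nat -> (2 ^ a = 2 ^ (a - b) * 2 ^ b)%R.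
Proof. intros H. rewrite <- pow_add. f_equal. lia. Qed.

Section Exist.
Variable k : nat.
Hypothesis hk : 1 <= k.

Definition sp (p : nat * nat) := fst p + snd p.
Definition KK := 2 * k + 1.
Definition QQ := k * KK.
Definition cnt (s1 : nat) := length (filter (fun p => s1 + k <=? sp p) (sqlist k)).
Definition pi (p : nat * nat) :=
  if sp p <? k then 1 + fst p
  else if andb (Nat.odd (cnt (sp p - k))) (fst p =? sp p - k + 1) then 0 else k + 1 + fst p.
Definition sg p := sp p * KK + pi p.
Definition Lt (t : nat) p := (t + sg p) / QQ.
Definition EE := k * k + 2.
Definition WW t := lsumN (sqlist k) (fun p => 2 ^ (EE - Lt t p)).

Lemma QQ_pos : QQ <> 0.
Proof. unfold QQ, KK. nia. Qed.

Lemma sp_bound p : In p (sqlist k) -> sp p <= 2 * k - 2.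
Proof. destruct p as [a b]. rewrite in_sqlist. unfold sp; simpl. lia. Qed.

Lemma pi_cases p : In p (sqlist k) ->
  (sp p < k /\ pi p = 1 + fst p) \/
  (k <= sp p /\ pi p = 0 /\ Nat.odd (cnt (sp p - k)) = true /\ fst p = sp p - k + 1) \/
  (k <= sp p /\ pi p = k + 1 + fst p).
Proof. intros Hp. unfold pi. destruct (Nat.ltb_spec (sp p) k); [left; auto|right].
  destruct (Nat.odd (cnt (sp p - k))) eqn:Eo; destruct (Nat.eqb_spec (fst p) (sp p - k + 1)); simpl; auto. Qed.

Lemma pi_lt p : In p (sqlist k) -> pi p < KK.
Proof. intros Hp. pose proof Hp as Hp'. destruct p as [a b]. apply in_sqlist in Hp'. unfold KK.
  destruct (pi_cases _ Hp) as [[_ E]|[[_ [E _]]|[_ E]]]; rewrite E; simpl in *; lia. Qed.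

Lemma sg_lt p : In p (sqlist k) -> sg p < 2 * QQ.
Proof. intros Hp. pose proof (sp_bound p Hp). pose proof (pi_lt p Hp). unfold sg, QQ, KK in *.
  assert (sp p * (2 * k + 1) <= (2 * k - 2) * (2 * k + 1)) by (apply Nat.mul_le_mono_r; lia). nia. Qed.


Lemma sg_inj p p' : In p (sqlist k) -> In p' (sqlist k) -> sg p = sg p' -> p = p'.
Proof. intros Hp Hp' E. unfold sg in E.
  destruct (decomp_uniq KK _ _ _ _ (pi_lt p Hp) (pi_lt p' Hp') E) as [Es Epi].
  destruct p as [a b], p' as [a' b']. unfold sp in *; simpl in *.
  destruct (pi_cases _ Hp) as [[H1 E1]|[[H1 [E1 [_ F1]]]|[H1 E1]]];
  destruct (pi_cases _ Hp') as [[H2 E2]|[[H2 [E2 [_ F2]]]|[H2 E2]]]; unfold sp in *; simpl in *;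
  try (assert (a = a') by lia; subst a'; assert (b = b') by lia; subst; reflexivity); lia.
Qed.

Lemma sg_noshift p p' : In p (sqlist k) -> In p' (sqlist k) -> sg p' <> sg p + QQ.
Proof. intros Hp Hp' E. unfold sg, QQ in E.
  replace (sp p * KK + pi p + k * KK) with ((sp p + k) * KK + pi p) in E by ring.
  destruct (decomp_uniq KK _ _ _ _ (pi_lt p' Hp') (pi_lt p Hp) E) as [Es Epi].
  pose proof (sp_bound p' Hp'). pose proof Hp as Hq. destruct p as [a b]. apply in_sqlist in Hq.
  destruct (pi_cases _ Hp) as [[H1 E1]|[[H1 [E1 [_ F1]]]|[H1 E1]]];
  destruct (pi_cases _ Hp') as [[H2 E2]|[[H2 [E2 [_ F2]]]|[H2 E2]]]; unfold sp in *; simpl in *; lia.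
Qed.

Lemma step_unique t p p' : In p (sqlist k) -> In p' (sqlist k) ->
  (t + sg p + 1) mod QQ = 0 -> (t + sg p' + 1) mod QQ = 0 -> p = p'.
Proof. intros Hp Hp' M1 M2.
  pose proof (Nat.div_mod_eq (t + sg p + 1) QQ) as D1. pose proof (Nat.div_mod_eq (t + sg p' + 1) QQ) as D2.
  rewrite M1 in D1; rewrite M2 in D2.
  set (x := (t + sg p + 1) / QQ) in *. set (y := (t + sg p' + 1) / QQ) in *.
  pose proof (sg_lt p Hp). pose proof (sg_lt p' Hp').
  destruct (Nat.lt_trichotomy x y) as [Hc|[Hc|Hc]].
  - destruct (Nat.eq_dec y (x + 1)) as [->|Hne].
    + exfalso. apply (sg_noshift p p' Hp Hp'). rewrite Nat.mul_add_distr_l in D2. lia.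
    + assert (Hm : QQ * (x + 2) <= QQ * y) by (apply Nat.mul_le_mono_l; lia). rewrite Nat.mul_add_distr_l in Hm. lia.
  - subst. apply sg_inj; auto. lia.
  - destruct (Nat.eq_dec x (y + 1)) as [->|Hne].
    + exfalso. apply (sg_noshift p' p Hp' Hp). rewrite Nat.mul_add_distr_l in D1. lia.
    + assert (Hm : QQ * (y + 2) <= QQ * x) by (apply Nat.mul_le_mono_l; lia). rewrite Nat.mul_add_distr_l in Hm. lia.
Qed.

Lemma step_eq t p : (t + sg p + 1) mod QQ = 0 -> t + sg p + 1 = QQ * Lt t p + QQ.
Proof. intros M. pose proof (Nat.div_mod_eq (t + sg p + 1) QQ). rewrite M in H.
  destruct (div_succ (t + sg p) QQ QQ_pos) as [D _]. rewrite (D M) in H. unfold Lt. 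
  rewrite Nat.mul_add_distr_l in H. lia. Qed.

Lemma Lt_le2 t p p' : In p' (sqlist k) -> (t + sg p + 1) mod QQ = 0 -> Lt t p' <= Lt t p + 2.
Proof. intros Hp' M. pose proof (step_eq t p M). pose proof (sg_lt p' Hp').
  assert (Lt t p' < Lt t p + 3); [|lia]. unfold Lt at 1. apply Nat.Div0.div_lt_upper_bound.
  rewrite !Nat.mul_add_distr_l. lia. Qed.

Lemma Lt_eq2 t p p' : In p' (sqlist k) -> (t + sg p + 1) mod QQ = 0 ->
  (Lt t p' = Lt t p + 2 <-> sg p + QQ + 1 <= sg p').
Proof. intros Hp' M. pose proof (step_eq t p M) as S. pose proof (sg_lt p' Hp'). split; intros H1.
  - pose proof (div_bounds (t + sg p') QQ QQ_pos) as [B _]. fold (Lt t p') in B. rewrite H1 in B.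
    rewrite !Nat.mul_add_distr_l in B. lia.
  - unfold Lt at 1. apply div_eq. rewrite !Nat.mul_add_distr_l. lia. Qed.

Lemma Lt_le1 t p p' : In p' (sqlist k) -> k <= sp p -> (t + sg p + 1) mod QQ = 0 -> Lt t p' <= Lt t p + 1.
Proof. intros Hp' Hs M. pose proof (step_eq t p M). pose proof (sg_lt p' Hp').
  assert (QQ <= sg p) by (unfold sg, QQ; assert (k * KK <= sp p * KK) by (apply Nat.mul_le_mono_r; auto); lia).
  assert (Lt t p' < Lt t p + 2); [|lia]. unfold Lt at 1. apply Nat.Div0.div_lt_upper_bound.
  rewrite !Nat.mul_add_distr_l. lia. Qed.

Lemma filter_len_split {A} (f g : A -> bool) l :
  length (filter f l) = length (filter (fun x => andb (f x) (g x)) l) + length (filter (fun x => andb (f x) (negb (g x))) l).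
Proof. induction l; simpl; auto. destruct (f a), (g a); simpl; lia. Qed.

Lemma filter_len_one {A} (g : A -> bool) l x0 : NoDup l -> In x0 l -> (forall x, In x l -> (g x = true <-> x = x0)) ->
  length (filter g l) = 1.
Proof. induction l as [|a l IH]; simpl; intros Hnd Hx H; [contradiction|]. inversion Hnd as [|? ? Hna Hnd']; subst.
  destruct Hx as [<-|Hx].
  - assert (Ga : g a = true) by (apply H; auto). rewrite Ga. simpl. f_equal.
    assert (Hf : forall x, In x l -> g x = false).
    { intros x Hxl. destruct (g x) eqn:E; auto. apply H in E; [subst; contradiction|auto]. }
    clear - Hf. induction l; simpl; auto. rewrite Hf by (left; auto). apply IHl. intros; apply Hf; right; auto.
  - assert (Ga : g a = false).
    { destruct (g a) eqn:E; auto. apply H in E; [subst; contradiction|auto]. }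
    rewrite Ga. apply IH; auto. Qed.

Lemma filter_len_zero {A} (g : A -> bool) l : (forall x, In x l -> g x = false) -> length (filter g l) = 0.
Proof. induction l; simpl; intros H; auto. rewrite H by auto. apply IHl; auto. Qed.

Lemma cnt_odd_small s : Nat.odd (cnt s) = true -> s + 1 < k.
Proof. intros Ho. unfold cnt in Ho.
  destruct (filter (fun p => s + k <=? sp p) (sqlist k)) as [|p l] eqn:E; [discriminate|].
  assert (In p (filter (fun p => s + k <=? sp p) (sqlist k))) by (rewrite E; left; auto).
  apply filter_In in H. destruct H as [Hp Hb]. apply Nat.leb_le in Hb. pose proof (sp_bound p Hp). lia. Qed.

Lemma parity_count t p : In p (sqlist k) -> sp p < k -> (t + sg p + 1) mod QQ = 0 ->
  Nat.even (length (filter (fun p' => Lt t p' =? Lt t p + 2) (sqlist k))) = true.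
Proof. intros Hp Hs M.
  set (s := sp p).
  assert (Epi : pi p = 1 + fst p) by (unfold pi; fold s; destruct (Nat.ltb_spec s k); lia).
  pose proof Hp as Hq. destruct p as [a b]. apply in_sqlist in Hq. simpl in Epi.
  set (f := fun p' => s + k <=? sp p').
  set (g := fun p' => andb (sp p' =? s + k) (pi p' =? 0)).
  rewrite (filter_ext_in _ (fun p' => andb (f p') (negb (g p')))).
  2:{ intros p' Hp'. apply Bool.eq_iff_eq_true. rewrite Nat.eqb_eq, (Lt_eq2 t (a,b) p' Hp' M).
      unfold f, g. rewrite Bool.andb_true_iff, Bool.negb_true_iff, Nat.leb_le.
      pose proof (pi_lt p' Hp') as Pl. unfold sg. fold s. rewrite Epi. unfold QQ, KK in *.
      destruct (Nat.lt_trichotomy (sp p') (s + k)) as [C|[C|C]].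
      - assert (sp p' * (2*k+1) + (2*k+1) <= (s + k) * (2*k+1)) by (rewrite <- Nat.mul_succ_l; apply Nat.mul_le_mono_r; lia).
        split; [nia|]. intros [C' _]. lia.
      - rewrite C. rewrite (proj2 (Nat.eqb_eq _ _) eq_refl). simpl.
        destruct (pi_cases p' Hp') as [[H1 E1]|[[H1 [E1 _]]|[H1 E1]]]; unfold sp in *; simpl in *; try lia.
        + rewrite E1. simpl. split; [nia|]. intros [_ X]; discriminate.
        + rewrite E1. destruct (k + 1 + fst p' =? 0) eqn:Z; [apply Nat.eqb_eq in Z; lia|]. simpl.
          split; [auto|]. intros _. nia.
      - assert ((s + k + 1) * (2*k+1) <= sp p' * (2*k+1)) by (apply Nat.mul_le_mono_r; lia).
        destruct (sp p' =? s + k) eqn:Z; [apply Nat.eqb_eq in Z; lia|]. simpl.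
        split; [intros _; lia|]. intros _. nia. }
  pose proof (filter_len_split f g (sqlist k)) as Sp.
  assert (Ef : length (filter f (sqlist k)) = cnt s) by reflexivity.
  assert (Eg : length (filter (fun x => andb (f x) (g x)) (sqlist k)) = if Nat.odd (cnt s) then 1 else 0).
  { destruct (Nat.odd (cnt s)) eqn:Ho.
    - pose proof (cnt_odd_small s Ho). apply filter_len_one with (s + 1, k - 1).
      + apply NoDup_sqlist.
      + apply in_sqlist; lia.
      + intros [a' b'] Hp'. pose proof Hp' as Hq'. apply in_sqlist in Hq'. unfold f, g.
        rewrite !Bool.andb_true_iff, Nat.leb_le, !Nat.eqb_eq. split.
        * intros [_ [E1 E2]]. destruct (pi_cases _ Hp') as [[H1 E3]|[[H1 [E3 [_ F3]]]|[H1 E3]]];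
            unfold sp in *; simpl in *; try lia. f_equal; lia.
        * intros E. injection E as -> ->. unfold sp; simpl. split; [lia|]. split; [lia|].
          unfold pi, sp; simpl. destruct (Nat.ltb_spec (s + 1 + (k - 1)) k); [lia|].
          replace (s + 1 + (k - 1) - k) with s by lia. rewrite Ho.
          rewrite (proj2 (Nat.eqb_eq _ _)) by lia. reflexivity.
    - apply filter_len_zero. intros [a' b'] Hp'. unfold f, g.
      destruct (s + k <=? sp (a', b')) eqn:Z1; simpl; auto.
      destruct (sp (a', b') =? s + k) eqn:Z2; simpl; auto. apply Nat.eqb_eq in Z2.
      destruct (pi (a', b') =? 0) eqn:Z3; auto. apply Nat.eqb_eq in Z3.
      destruct (pi_cases _ Hp') as [[H1 E3]|[[H1 [E3 [O3 F3]]]|[H1 E3]]]; unfold sp in *; simpl in *; try lia.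
      rewrite Z2 in O3. replace (s + k - k) with s in O3 by lia. congruence. }
  rewrite Ef, Eg in Sp.
  destruct (Nat.odd (cnt s)) eqn:Ho.
  - apply Nat.odd_spec in Ho. destruct Ho as [m Hm]. apply Nat.even_spec. exists m. lia.
  - assert (Nat.even (cnt s) = true) by (rewrite <- Nat.negb_odd, Ho; auto).
    apply Nat.even_spec in H. destruct H as [m Hm]. apply Nat.even_spec. exists m. lia.
Qed.


Definition NN := QQ * (k * k).

Lemma Lt_bound t p : In p (sqlist k) -> t <= NN -> Lt t p < EE.
Proof. intros Hp Ht. pose proof (sg_lt p Hp). unfold Lt, EE. apply Nat.Div0.div_lt_upper_bound.
  unfold NN in Ht. rewrite Nat.mul_add_distr_l. lia. Qed.

Lemma step_L_bound t p : In p (sqlist k) -> t < NN -> (t + sg p + 1) mod QQ = 0 -> Lt t p + 2 <= EE.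
Proof. intros Hp Ht M. pose proof (step_eq t p M). pose proof (sg_lt p Hp). unfold EE, NN in *.
  assert (Lt t p + 1 < k * k + 2); [|lia].
  apply (Nat.mul_lt_mono_pos_l QQ). pose proof QQ_pos; lia. rewrite !Nat.mul_add_distr_l. lia. Qed.

Lemma pow2_split a b : b <= a -> 2 ^ a = 2 ^ (a - b) * 2 ^ b.
Proof. intros H. rewrite <- Nat.pow_add_r. f_equal. lia. Qed.

Lemma WW_div t p : In p (sqlist k) -> t < NN -> (t + sg p + 1) mod QQ = 0 ->
  Nat.divide (2 ^ (EE - (Lt t p + 1))) (WW t).
Proof. intros Hp Ht M. pose proof (step_L_bound t p Hp Ht M) as HB. set (L := Lt t p) in *.
  assert (Hterm : forall p', In p' (sqlist k) -> Lt t p' <= L + 1 -> Nat.divide (2 ^ (EE - (L + 1))) (2 ^ (EE - Lt t p'))).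
  { intros p' Hp' Hle. rewrite (pow2_split (EE - Lt t p') (EE - (L + 1))) by lia.
    apply Nat.divide_factor_r. }
  unfold WW. destruct (Nat.lt_ge_cases (sp p) k) as [Hs|Hs].
  - rewrite (lsumN_filter (fun p' => Lt t p' =? L + 2)). apply Nat.divide_add_r.
    + rewrite (lsumN_const _ _ (2 ^ (EE - (L + 2)))).
      2:{ intros x Hx. apply filter_In in Hx. destruct Hx as [_ Hx]. apply Nat.eqb_eq in Hx. rewrite Hx. auto. }
      pose proof (parity_count t p Hp Hs M) as Ev. fold L in Ev. apply Nat.even_spec in Ev. destruct Ev as [m Hm].
      rewrite Hm. exists m. rewrite (pow2_split (EE - (L + 1)) 1) by lia.
      replace (EE - (L + 1) - 1) with (EE - (L + 2)) by lia. simpl. lia.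
    + apply lsumN_div. intros x Hx. apply filter_In in Hx. destruct Hx as [Hx Hb].
      apply Bool.negb_true_iff, Nat.eqb_neq in Hb. apply Hterm; auto.
      pose proof (Lt_le2 t p x Hx M). fold L in H. lia.
  - apply lsumN_div. intros x Hx. apply Hterm; auto. apply (Lt_le1 t p x Hx Hs M).
Qed.

Lemma Lt_succ_nostep t p : (t + sg p + 1) mod QQ <> 0 -> Lt (S t) p = Lt t p.
Proof. intros M. unfold Lt. replace (S t + sg p) with (t + sg p + 1) by lia.
  apply (proj2 (div_succ (t + sg p) QQ QQ_pos)); auto. Qed.

Lemma Lt_succ_step t p : (t + sg p + 1) mod QQ = 0 -> Lt (S t) p = Lt t p + 1.
Proof. intros M. unfold Lt. replace (S t + sg p) with (t + sg p + 1) by lia.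
  apply (proj1 (div_succ (t + sg p) QQ QQ_pos)); auto. Qed.

Lemma WW_step t : t < NN -> 2 ^ EE <= WW t -> 2 ^ EE <= WW (S t) \/ WW t = 2 ^ EE.
Proof. intros Ht HW.
  destruct (Classical_Prop.classic (exists p, In p (sqlist k) /\ (t + sg p + 1) mod QQ = 0)) as [[p [Hp M]]|Hn].
  - pose proof (step_L_bound t p Hp Ht M) as HB.
    assert (Hch : WW (S t) + 2 ^ (EE - Lt t p) = WW t + 2 ^ (EE - Lt (S t) p)).
    { unfold WW. apply (lsumN_change _ (fun p => 2 ^ (EE - Lt (S t) p)) (fun p => 2 ^ (EE - Lt t p)) p); auto. apply NoDup_sqlist.
      intros x Hx Hxp. rewrite Lt_succ_nostep; auto. intros Mx. apply Hxp. apply (step_unique t x p); auto. }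
    rewrite Lt_succ_step in Hch by auto.
    rewrite (pow2_split (EE - Lt t p) 1) in Hch by lia. replace (EE - Lt t p - 1) with (EE - (Lt t p + 1)) in Hch by lia.
    set (u := 2 ^ (EE - (Lt t p + 1))) in *. simpl in Hch.
    destruct (WW_div t p Hp Ht M) as [x Hx]. fold u in Hx.
    assert (Hu : Nat.divide u (2 ^ EE)).
    { unfold u. rewrite (pow2_split EE (EE - (Lt t p + 1))) by lia. apply Nat.divide_factor_r. }
    destruct Hu as [y Hy].
    assert (0 < u) by (unfold u; apply Nat.neq_0_lt_0, Nat.pow_nonzero; lia).
    destruct (Nat.eq_dec (WW t) (2 ^ EE)) as [E|E]; [right; auto|left].
    assert (y < x).
    { destruct (Nat.lt_ge_cases y x); auto. assert (x * u <= y * u) by (apply Nat.mul_le_mono_r; auto). lia. }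
    assert (Hm : (y + 1) * u <= x * u) by (apply Nat.mul_le_mono_r; lia). rewrite Nat.mul_add_distr_r in Hm. lia.
  - left. replace (WW (S t)) with (WW t); auto. unfold WW. apply lsumN_ext. intros x Hx.
    rewrite Lt_succ_nostep; auto. intros Mx. apply Hn. exists x; auto.
Qed.

Lemma ivt (W : nat -> nat) P N : P <= W 0 -> W N < P ->
  (forall t, t < N -> P <= W t -> P <= W (S t) \/ W t = P) -> exists t, t <= N /\ W t = P.
Proof. intros H0 HN Hs.
  assert (forall t, t <= N -> (exists t', t' <= N /\ W t' = P) \/ P <= W t).
  { induction t; intros Ht; [right; auto|].
    destruct (IHt ltac:(lia)) as [E|E]; [left; auto|].
    destruct (Hs t ltac:(lia) E) as [E'|E']; [right; auto|left; exists t; split; auto; lia]. }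
  destruct (H N (le_n N)) as [E|E]; auto. lia. Qed.

Lemma WW_0 : 2 ^ EE <= WW 0.
Proof. unfold WW. eapply Nat.le_trans; [|apply (lsumN_ge_term _ _ (0,0))].
  - assert (Lt 0 (0, 0) = 0).
    { unfold Lt, sg, pi, sp; simpl. destruct (Nat.ltb_spec 0 k); [|lia]. apply Nat.div_small.
      unfold QQ, KK. nia. }
    cbv beta. rewrite H, Nat.sub_0_r. auto.
  - apply in_sqlist; lia. Qed.

Lemma WW_N : WW NN < 2 ^ EE.
Proof. unfold WW. eapply Nat.le_lt_trans. apply (lsumN_bound _ _ 4).
  - intros p Hp. assert (k * k <= Lt NN p).
    { unfold Lt. apply Nat.div_le_lower_bound. apply QQ_pos. unfold NN. lia. }
    replace 4 with (2 ^ 2) by reflexivity. apply Nat.pow_le_mono_r; [lia|]. unfold EE. lia.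
  - unfold sqlist. rewrite length_prod, length_seq. unfold EE. rewrite Nat.pow_add_r.
    pose proof (Nat.pow_gt_lin_r 2 (k * k) ltac:(lia)). simpl. lia. Qed.

Lemma exists_lstar : exists t, t <= NN /\ WW t = 2 ^ EE.
Proof. apply ivt. apply WW_0. apply WW_N. apply WW_step. Qed.

Lemma dual_bound t p : In p (sqlist k) ->
  k * Lt t p + 2 * k - sp p <= (t + KK - 1) / KK + 2 * k /\
  (t + KK - 1) / KK + 2 * k <= k * Lt t p + 2 * k - sp p + k.
Proof. intros Hp. pose proof (sp_bound p Hp). pose proof (pi_lt p Hp).
  pose proof (div_bounds (t + sg p) QQ QQ_pos) as [B1 B2]. fold (Lt t p) in B1, B2.
  assert (HK : KK <> 0) by (unfold KK; lia).
  pose proof (div_bounds (t + KK - 1) KK HK) as [C1 C2].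
  set (tt := (t + KK - 1) / KK) in *. set (L := Lt t p) in *.
  assert (EQ : QQ * L = KK * (k * L)) by (unfold QQ; ring). rewrite EQ in B1. 
  rewrite Nat.mul_add_distr_l, EQ in B2. rewrite Nat.mul_add_distr_l in C2.
  unfold sg in B1, B2. set (A := k * L) in *.
  assert (QQ = KK * k) by (unfold QQ; ring). rewrite H1 in B2.
  split.
  - assert (A <= tt + sp p); [|lia].
    destruct (Nat.le_gt_cases A (tt + sp p)) as [|C]; auto.
    assert (KK * (tt + sp p + 1) <= KK * A) by (apply Nat.mul_le_mono_l; lia).
    rewrite !Nat.mul_add_distr_l in H2. lia.
  - assert (tt + sp p <= A + k); [|lia].
    destruct (Nat.le_gt_cases (tt + sp p) (A + k)) as [|C]; auto.
    assert (KK * (A + k + 1) <= KK * (tt + sp p)) by (apply Nat.mul_le_mono_l; lia).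
    rewrite !Nat.mul_add_distr_l in H2. lia.
Qed.

End Exist.

Close Scope nat_scope.

Lemma lstar_exists k : (1 <= k)%nat -> exists (ls : nat -> nat -> nat) (E0 : nat),
  rsq k (fun a b => (/2) ^ (ls a b)) = 1 /\
  (forall a b, (a < k)%nat -> (b < k)%nat ->
     (k * ls a b + 2 * k - (a + b) <= E0 <= k * ls a b + 2 * k - (a + b) + k)%nat).
Proof. intros hk. destruct (exists_lstar k hk) as [t [Ht HW]].
  exists (fun a b => Lt k t (a, b)), ((t + KK k - 1) / KK k + 2 * k)%nat. split.
  - rewrite rsq_lsum.
    rewrite (lsum_ext _ _ (fun p => INR (2 ^ (EE k - Lt k t p)) / 2 ^ (EE k))).
    + unfold Rdiv. rewrite lsum_map_r. rewrite <- INR_lsumN. fold (WW k t). rewrite HW, INR_pow2.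
      apply Rinv_r. apply pow_nonzero. lra.
    + intros [a b] Hp. simpl. pose proof (Lt_bound k hk t (a, b) Hp Ht).
      rewrite INR_pow2. rewrite (pow_split_R (EE k) (Lt k t (a,b))) by lia.
      pose proof (pow2_half (Lt k t (a, b))). pose proof (pow_lt 2 (EE k - Lt k t (a,b)) ltac:(lra)).
      pose proof (pow_lt 2 (Lt k t (a,b)) ltac:(lra)).
      set (L := Lt k t (a, b)) in *. set (X := 2 ^ (EE k - L)) in *. set (Y := 2 ^ L) in *.
      assert (Hz : (/2) ^ L = / Y).
      { apply Rmult_eq_reg_l with Y; [|lra]. rewrite H0, Rinv_r; lra. }
      rewrite Hz. field. lra.
  - intros a b Ha Hb. apply (dual_bound k hk t (a, b)). apply in_sqlist; auto.
Qed.

Lemma app_prefix_cmp (u r u' r' : word) : u ++ r = u' ++ r' -> is_prefix u u' \/ is_prefix u' u.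
Proof. revert u'. induction u as [|b u IH]; intros u' E.
  - left. exists u'. reflexivity.
  - destruct u' as [|b' u'].
    + right. exists (b :: u). reflexivity.
    + simpl in E. injection E as -> E. destruct (IH u' E) as [[w Hw]|[w Hw]].
      * left. exists w. rewrite Hw. reflexivity.
      * right. exists w. rewrite Hw. reflexivity. Qed.

Lemma rep_app_inj x : forall x' (r r' : word), repeat true x ++ false :: r = repeat true x' ++ false :: r' -> x = x' /\ r = r'.
Proof. induction x as [|x IH]; intros [|x'] r r' E; simpl in E.
  - injection E as ->; auto.
  - discriminate.
  - discriminate.
  - injection E as E. destruct (IH x' r r' E). auto. Qed.

Lemma unary_app_inj x x' r r' : unary x ++ r = unary x' ++ r' -> x = x' /\ r = r'.
Proof. unfold unary. rewrite <- !app_assoc. simpl. apply rep_app_inj. Qed.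

Lemma unary_length x : length (unary x) = S x.
Proof. unfold unary. rewrite length_app, repeat_length. simpl. lia. Qed.

Lemma C_prefix k (hk : (1 <= k)%nat) (T : nat -> nat -> word) : prefix_code_fin k T ->
  prefix_code (fun i j => T (i mod k)%nat (j mod k)%nat ++ unary (i / k)%nat ++ unary (j / k)%nat).
Proof. intros HT i j i' j' Hne [w Hw].
  rewrite <- !app_assoc in Hw.
  assert (Hk : k <> 0%nat) by lia.
  destruct (Nat.eq_dec ((i mod k)%nat) ((i' mod k)%nat)) as [Ea|Ea];
  [destruct (Nat.eq_dec ((j mod k)%nat) ((j' mod k)%nat)) as [Eb|Eb]|].
  - rewrite Ea, Eb in Hw. apply app_inv_head in Hw.
    symmetry in Hw. apply unary_app_inj in Hw. destruct Hw as [Ex Hw].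
    rewrite <- (app_nil_r (unary (j' / k))) in Hw. symmetry in Hw. apply unary_app_inj in Hw.
    destruct Hw as [Ey _]. apply Hne. f_equal.
    + rewrite (Nat.div_mod_eq i k), (Nat.div_mod_eq i' k). rewrite Ea, Ex. reflexivity.
    + rewrite (Nat.div_mod_eq j k), (Nat.div_mod_eq j' k). rewrite Eb, Ey. reflexivity.
  - destruct (app_prefix_cmp _ _ _ _ Hw) as [P|P].
    + apply (HT (i' mod k)%nat (j' mod k)%nat (i mod k)%nat (j mod k)%nat); try apply Nat.mod_upper_bound; auto.
      intros E; injection E; intros; apply Eb; auto.
    + apply (HT (i mod k)%nat (j mod k)%nat (i' mod k)%nat (j' mod k)%nat); try apply Nat.mod_upper_bound; auto.
      intros E; injection E; intros; apply Eb; auto.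
  - destruct (app_prefix_cmp _ _ _ _ Hw) as [P|P].
    + apply (HT (i' mod k)%nat (j' mod k)%nat (i mod k)%nat (j mod k)%nat); try apply Nat.mod_upper_bound; auto.
      intros E; injection E; intros; apply Ea; auto.
    + apply (HT (i mod k)%nat (j mod k)%nat (i' mod k)%nat (j' mod k)%nat); try apply Nat.mod_upper_bound; auto.
      intros E; injection E; intros; apply Ea; auto.
Qed.

Lemma rsq_ext n F G : (forall i j, (i < n)%nat -> (j < n)%nat -> F i j = G i j) -> rsq n F = rsq n G.
Proof. intros H. unfold rsq. apply rsum_ext; intros. apply rsum_ext; intros. auto. Qed.
Lemma rsq_le n F G : (forall i j, (i < n)%nat -> (j < n)%nat -> F i j <= G i j) -> rsq n F <= rsq n G.
Proof. intros H. unfold rsq. apply rsum_le; intros. apply rsum_le; intros. auto. Qed.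
Lemma rsq_plus n F G : rsq n (fun i j => F i j + G i j) = rsq n F + rsq n G.
Proof. unfold rsq. rewrite <- rsum_plus. apply rsum_ext; intros. apply rsum_plus. Qed.
Lemma rsq_scal n c F : rsq n (fun i j => c * F i j) = c * rsq n F.
Proof. unfold rsq. rewrite <- rsum_scal. apply rsum_ext; intros. apply rsum_scal. Qed.

Lemma rsq_reindex k M F : rsq (k * M) F =
  rsum M (fun x => rsum k (fun a => rsum M (fun y => rsum k (fun b => F (a + k * x)%nat (b + k * y)%nat)))).
Proof. unfold rsq. rewrite rsum_reindex. apply rsum_ext; intros x _. apply rsum_ext; intros a _.
  apply rsum_reindex. Qed.

Lemma rsq_factor k M F G :
  (forall a b x y, (a < k)%nat -> (b < k)%nat -> (x < M)%nat -> (y < M)%nat ->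
     F (a + k * x)%nat (b + k * y)%nat = (/2) ^ x * (/2) ^ y * G a b) ->
  rsq (k * M) F = rsum M (fun x => (/2) ^ x) * rsum M (fun x => (/2) ^ x) * rsq k G.
Proof. intros H. rewrite rsq_reindex.
  transitivity (rsum M (fun x => (/2) ^ x * (rsum M (fun y => (/2) ^ y) * rsq k G))).
  2:{ rewrite rsum_scal_r, Rmult_assoc. reflexivity. }
  apply rsum_ext; intros x Hx.
  transitivity (rsum k (fun a => (/2) ^ x * (rsum M (fun y => (/2) ^ y) * rsum k (fun b => G a b)))).
  2:{ rewrite rsum_scal. f_equal. rewrite rsum_scal. auto. }
  apply rsum_ext; intros a Ha.
  transitivity (rsum M (fun y => (/2) ^ x * ((/2) ^ y * rsum k (fun b => G a b)))).
  2:{ rewrite rsum_scal. f_equal. rewrite rsum_scal_r. auto. }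
  apply rsum_ext; intros y Hy. rewrite <- !rsum_scal. apply rsum_ext; intros b Hb.
  rewrite H by auto. ring. Qed.

Lemma geom_half M : rsum M (fun x => (/2) ^ x) = 2 - 2 * (/2) ^ M.
Proof. induction M; simpl; [lra|]. rewrite IHM. field. Qed.

Lemma rsq_extra n m F : (n < m)%nat -> (forall i j, 0 <= F i j) -> rsq n F + F n 0%nat <= rsq m F.
Proof. intros Hnm H. unfold rsq.
  apply Rle_trans with (rsum (S n) (fun i => rsum m (fun j => F i j))).
  - simpl. apply Rplus_le_compat.
    + apply rsum_le; intros. apply rsum_mono; [lia|auto].
    + apply Rle_trans with (rsum 1 (fun j => F n j)). simpl; lra. apply rsum_mono; [lia|auto].
  - apply rsum_mono; [lia|]. intros. apply rsum_nonneg; auto. Qed.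

Definition eqdp : forall x y : nat * nat, {x = y} + {x <> y}.
Proof. decide equality; apply Nat.eq_dec. Defined.
Lemma rsq_scal_r_sq n F c : rsq n (fun a b => F a b * c) = rsq n F * c.
Proof. unfold rsq. rewrite <- rsum_scal_r. apply rsum_ext; intros. apply rsum_scal_r. Qed.

Lemma sq_cost_tdgd n q C : sq_cost n (tdgd q) C = (1 - q) ^ 2 * sq_cost n (fun i j => q ^ (i + j)) C.
Proof. change (rsq n (fun i j => tdgd q i j * INR (length (C i j))) =
     (1 - q) ^ 2 * rsq n (fun i j => q ^ (i + j) * INR (length (C i j)))).
  rewrite <- rsq_scal. apply rsq_ext; intros. unfold tdgd. ring. Qed.

Lemma moddiv k a x : (a < k)%nat -> ((a + k * x) mod k = a /\ (a + k * x) / k = x)%nat.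
Proof. intros H. rewrite (Nat.mul_comm k x). split.
  - rewrite Nat.Div0.mod_add. apply Nat.mod_small; auto.
  - rewrite Nat.div_add by lia. rewrite Nat.div_small by auto. lia. Qed.

Theorem theorem2 (k : nat) (hk : (1 <= k)%nat) (T : nat -> nat -> word)
  (HT : optimal_fin k (qk k) T) :
  optimal_tdgd (qk k)
    (fun i j => T (i mod k)%nat (j mod k)%nat ++ unary (i / k)%nat ++ unary (j / k)%nat).
Proof.
  destruct HT as [HTp HTopt].
  split. { apply C_prefix; auto. }
  intros D HD n.
  pose proof (q_pos k) as Hq0. pose proof (q_pow_k k hk) as Hqk.
  pose proof (q_le1 k hk) as Hq1. pose proof (q_ge_half k hk) as Hqh.
  set (q := qk k) in *.
  set (C := fun i j => T (i mod k)%nat (j mod k)%nat ++ unary (i / k)%nat ++ unary (j / k)%nat).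
  destruct (lstar_exists k hk) as [ls [E0 [HK HD0]]].
  set (r := / q).
  assert (Hr1 : 1 <= r). { unfold r. rewrite <- Rinv_1. apply Rinv_le_contravar; lra. }
  assert (Hr2 : r <= 2). { unfold r. replace 2 with (/ / 2) by field. apply Rinv_le_contravar; lra. }
  assert (Hrk : r ^ k = 2). { unfold r. rewrite pow_inv, Hqk. field. }
  assert (Hrq : forall e, q ^ e * r ^ e = 1).
  { intros e. rewrite <- Rpow_mult_distr. unfold r. rewrite Rinv_r by lra. apply pow1. }
  set (mu := r ^ E0).
  set (M := (n + 1 + E0)%nat).
  exists (k * M)%nat.
  rewrite !sq_cost_tdgd. apply Rmult_le_compat_l. { apply pow_le. lra. }
  set (w := fun i j : nat => q ^ (i + j)).
  change (sq_cost n w C <= sq_cost (k * M) w D).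
  set (m := (k * M)%nat).
  set (ns := fun i j => (ls (i mod k) (j mod k) + i / k + j / k + 2)%nat).
  assert (Hk0 : k <> 0%nat) by lia.
  assert (Hpt : forall i j, w i j * INR (ns i j) + mu * (/2) ^ (ns i j) <=
                            w i j * INR (length (D i j)) + mu * (/2) ^ (length (D i j))).
  { intros i j.
    set (a := (i mod k)%nat). set (b := (j mod k)%nat).
    assert (Ha : (a < k)%nat) by (apply Nat.mod_upper_bound; auto).
    assert (Hb : (b < k)%nat) by (apply Nat.mod_upper_bound; auto).
    pose proof (Nat.div_mod_eq i k) as Hi. pose proof (Nat.div_mod_eq j k) as Hj. fold a in Hi. fold b in Hj.
    destruct (HD0 a b Ha Hb) as [Hd1 Hd2].
    set (d := (k * ls a b + 2 * k - (a + b))%nat) in *.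
    assert (Hkey : 2 ^ ns i j * w i j = r ^ d).
    { unfold w. rewrite <- Hrk, <- pow_mult.
      replace (k * ns i j)%nat with (d + (i + j))%nat.
      2:{ unfold ns, d. fold a b. rewrite !Nat.mul_add_distr_l. nia. }
      rewrite pow_add. rewrite Rmult_assoc, (Rmult_comm (r ^ (i + j))), Hrq. ring. }
    apply dual_pt.
    - unfold w. apply pow_lt; lra.
    - unfold mu. apply pow_le; lra.
    - rewrite Hkey. unfold mu. apply Rle_pow; auto.
    - rewrite pow_add, Rmult_comm, <- Rmult_assoc, (Rmult_comm (w i j)), Hkey. simpl. rewrite Rmult_1_r.
      rewrite <- Hrk, <- pow_add. unfold mu. apply Rle_pow; auto; lia. }
  assert (Hsum : rsq m (fun i j => w i j * INR (ns i j)) + mu * rsq m (fun i j => (/2) ^ (ns i j)) <=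
                 sq_cost m w D + mu * rsq m (fun i j => (/2) ^ (length (D i j)))).
  { rewrite <- !rsq_scal. change (sq_cost m w D) with (rsq m (fun i j => w i j * INR (length (D i j)))).
    rewrite <- !rsq_plus. apply rsq_le; intros. apply Hpt. }
  assert (HKD : rsq m (fun i j => (/2) ^ (length (D i j))) <= 1).
  { rewrite rsq_lsum.
    apply (kraft (lsumN (sqlist m) (fun p => length (D (fst p) (snd p)))) (sqlist m) (fun p => D (fst p) (snd p))).
    - apply NoDup_sqlist.
    - intros x Hx. apply (lsumN_ge_term _ (fun p => length (D (fst p) (snd p)))); auto.
    - intros [i j] [i' j'] _ _ Hne. simpl. apply HD. auto. }
  set (h := (/2) ^ M).
  set (Sg := rsum M (fun x => (/2) ^ x)).
  assert (HS : Sg = 2 - 2 * h) by apply geom_half.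
  assert (Hh0 : 0 < h) by apply pow_half_pos.
  assert (Hh1 : h <= 1) by (apply pow_le1; lra).
  assert (HB1 : rsq m (fun i j => (/2) ^ (ns i j)) = (1 - h) ^ 2).
  { unfold m. rewrite (rsq_factor k M _ (fun a b => (/2) ^ (ls a b) * / 4)).
    - rewrite rsq_scal_r_sq, HK. fold Sg. rewrite HS. field.
    - intros a b x y Ha Hb Hx Hy. unfold ns. destruct (moddiv k a x Ha) as [-> ->].
      destruct (moddiv k b y Hb) as [-> ->]. rewrite !pow_add. simpl. field. }
  assert (HT' : exists T' : nat -> nat -> word, prefix_code_fin k T' /\
     forall a b, (a < k)%nat -> (b < k)%nat -> length (T' a b) = ls a b).
  { destruct (kraft_converse eqdp (fun p => ls (fst p) (snd p)) (sqlist k) (NoDup_sqlist k)) as [f [Hf1 Hf2]].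
    - rewrite <- (rsq_lsum k (fun a b => (/2) ^ (ls a b))). lra.
    - exists (fun a b => f (a, b)). split.
      + intros i j i' j' Hi Hj Hi' Hj' Hne. apply Hf2; auto; apply in_sqlist; auto.
      + intros a b Ha Hb. apply (Hf1 (a, b)). apply in_sqlist; auto. }
  destruct HT' as [T' [HT'p HT'l]].
  pose proof (HTopt T' HT'p) as Hopt.
  set (Dl := rsq k (fun a b => q ^ (a + b) * (INR (ls a b) - INR (length (T a b))))).
  assert (HDl : 0 <= Dl).
  { assert (E : sq_cost k (fun i j => q ^ (i + j)) T' = rsq k (fun a b => q ^ (a + b) * INR (ls a b))).
    { apply rsq_ext. intros a b Ha Hb. rewrite HT'l; auto. }
    rewrite E in Hopt. unfold Dl.
    replace (rsq k (fun a b => q ^ (a + b) * (INR (ls a b) - INR (length (T a b)))))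
      with (rsq k (fun a b => q ^ (a + b) * INR (ls a b)) + (-1) * sq_cost k (fun i j => q ^ (i + j)) T).
    - lra.
    - change (sq_cost k (fun i j => q ^ (i + j)) T) with (rsq k (fun i j => q ^ (i + j) * INR (length (T i j)))).
      rewrite <- rsq_scal, <- rsq_plus. apply rsq_ext; intros. ring. }
  assert (HA1 : rsq m (fun i j => w i j * INR (ns i j)) = sq_cost m w C + Sg * Sg * Dl).
  { replace (rsq m (fun i j => w i j * INR (ns i j))) with
      (rsq m (fun i j => w i j * INR (length (C i j))) + rsq m (fun i j => w i j * (INR (ns i j) - INR (length (C i j))))).
    2:{ rewrite <- rsq_plus. apply rsq_ext; intros; ring. }
    f_equal. unfold m. apply rsq_factor. intros a b x y Ha Hb Hx Hy.
    unfold w, ns, C. destruct (moddiv k a x Ha) as [-> ->]. destruct (moddiv k b y Hb) as [-> ->].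
    rewrite !length_app, !unary_length, !plus_INR, !S_INR.
    replace (a + k * x + (b + k * y))%nat with (a + b + k * x + k * y)%nat by lia.
    rewrite !pow_add, !pow_mult, Hqk. change (INR 0) with 0. ring. }
  assert (HS0 : 0 <= Sg) by (rewrite HS; lra).
  assert (HC : sq_cost n w C + 2 * (/2) ^ n <= sq_cost m w C).
  { assert (Hnm : (n < m)%nat) by (unfold m, M; nia).
    apply Rle_trans with (sq_cost n w C + w n 0%nat * INR (length (C n 0%nat))).
    - apply Rplus_le_compat_l. unfold w, C. rewrite Nat.add_0_r, !length_app, !unary_length.
      assert ((/2) ^ n <= q ^ n) by (apply pow_incr; lra).
      assert (2 <= INR (length (T (n mod k)%nat (0 mod k)%nat) + (S (n / k) + S (0 / k))))
        by (replace 2 with (INR 2) by (simpl; ring); apply le_INR; lia).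
      pose proof (pow_half_pos n). nra.
    - apply (rsq_extra n m (fun i j => w i j * INR (length (C i j)))); auto.
      intros. unfold w. apply Rmult_le_pos; [apply pow_le; lra|apply pos_INR]. }
  assert (Hmuh : mu * h <= /2 * (/2) ^ n).
  { unfold mu, h, M. rewrite pow_add, pow_add. 
    assert (r ^ E0 <= 2 ^ E0) by (apply pow_incr; lra).
    pose proof (pow2_half E0). pose proof (pow_half_pos E0). pose proof (pow_half_pos n).
    assert (0 <= r ^ E0) by (apply pow_le; lra).
    apply Rle_trans with (2 ^ E0 * ((/ 2) ^ n * (/ 2) ^ 1 * (/ 2) ^ E0)).
    - apply Rmult_le_compat_r; auto. apply Rmult_le_pos; [apply Rmult_le_pos|]; lra.
    - replace (2 ^ E0 * ((/ 2) ^ n * (/ 2) ^ 1 * (/ 2) ^ E0)) with ((2 ^ E0 * (/ 2) ^ E0) * ((/ 2) ^ n * / 2)) by (simpl; ring).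
      rewrite H0. lra. }
  assert (Hmu0 : 0 <= mu) by (unfold mu; apply pow_le; lra).
  rewrite HB1, HA1 in Hsum.
  assert (0 <= Sg * Sg * Dl) by (apply Rmult_le_pos; [apply Rmult_le_pos|]; auto).
  assert (mu * rsq m (fun i j => (/ 2) ^ length (D i j)) <= mu) by (rewrite <- (Rmult_1_r mu) at 2; apply Rmult_le_compat_l; auto).
  assert (mu * (1 - h) ^ 2 >= mu - 2 * (mu * h)) by nra.
  pose proof (pow_half_pos n).
  lra.
Qed.
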